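(* Pseudo-rotations are generic in $\overline{\mathcal{O}}^{\infty}(\mathbb{T}^2)$ and in $\overline{\mathcal{O}_\mu}^{\infty}(\mathbb{T}^2)$.
   Context: $\overline{\mathcal{O}}^{\infty}(\mathbb{T}^2)$ is the $C^\infty$-closure of $\{h\circ R_\theta\circ h^{-1}: h\in\mathrm{Diff}^\infty(\mathbb{T}^2),\theta\in\mathbb{T}^2\}$ where $R_\theta(x)=x+\theta$ on $\mathbb{T}^2=\mathbb{R}^2/\mathbb{Z}^2$, with the $C^\infty$ metric; $\overline{\mathcal{O}_\mu}^{\infty}(\mathbb{T}^2)$ is the same with $h$ area-preserving. Generic means holding on a countable intersection of open dense subsets. For $f$ a torus homeomorphism homotopic to the identity with lift $\tilde f$, its rotation set is $\rho(\tilde f)=\lim_{n\to\infty}\tilde f^n(D)/n$ (Hausdorff limit, $D$ a fundamental domain of $\mathbb{Z}^2$); $f$ is a pseudo-rotation if its rotation set is a single vector. *)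

(* Defs.v *)
(* Stdlib reals + Coquelicot.
   The torus T^2 = R^2/Z^2 is handled through lifts R^2 -> R^2. *)
From Stdlib Require Import Reals ZArith List.
From Coquelicot Require Import Coquelicot.
Open Scope R_scope.

Definition pt : Type := (R * R)%type.

Definition partial (b : bool) (g : pt -> R) : pt -> R :=
  fun p => if b then Derive (fun t => g (t, snd p)) (fst p)
           else Derive (fun t => g (fst p, t)) (snd p).

Definition iter_partial (l : list bool) (g : pt -> R) : pt -> R :=
  fold_right partial g l.

Definition partial_exists (b : bool) (g : pt -> R) (p : pt) : Prop :=
  if b then ex_derive (fun t => g (t, snd p)) (fst p)
  else ex_derive (fun t => g (fst p, t)) (snd p).

Definition smooth_fun (g : pt -> R) : Prop :=
  forall (l : list bool) (p : pt),
    continuous (iter_partial l g) p /\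
    forall b, partial_exists b (iter_partial l g) p.

Definition smooth_map (F : pt -> pt) : Prop :=
  smooth_fun (fun p => fst (F p)) /\ smooth_fun (fun p => snd (F p)).

(** [F] lifts a torus map homotopic to the identity: commutes with Z^2. *)
Definition commutes_Z2 (F : pt -> pt) : Prop :=
  forall (p : pt) (m n : Z),
    F (fst p + IZR m, snd p + IZR n) = (fst (F p) + IZR m, snd (F p) + IZR n).

Definition equivariant_Z2 (F : pt -> pt) : Prop :=
  exists a b c d : Z, forall (p : pt) (m n : Z),
    F (fst p + IZR m, snd p + IZR n) =
      (fst (F p) + IZR (a * m + b * n), snd (F p) + IZR (c * m + d * n)).

Definition diffeo_lift (H Hinv : pt -> pt) : Prop :=
  smooth_map H /\ smooth_map Hinv /\
  (forall p, H (Hinv p) = p) /\ (forall p, Hinv (H p) = p) /\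
  equivariant_Z2 H /\ equivariant_Z2 Hinv.

(** Ambient space: lifts of C^oo diffeomorphisms of T^2 homotopic to the identity. *)
Definition diff0 (F : pt -> pt) : Prop :=
  commutes_Z2 F /\ exists Finv, diffeo_lift F Finv.

Definition jacobian (H : pt -> pt) (p : pt) : R :=
  partial true (fun q => fst (H q)) p * partial false (fun q => snd (H q)) p
  - partial false (fun q => fst (H q)) p * partial true (fun q => snd (H q)) p.

Definition area_preserving (H : pt -> pt) : Prop :=
  forall p, Rabs (jacobian H p) = 1.

Definition conj_rotation (F : pt -> pt) : Prop :=
  exists (H Hinv : pt -> pt) (theta : pt), diffeo_lift H Hinv /\
    forall x, F x = H (fst (Hinv x) + fst theta, snd (Hinv x) + snd theta).

Definition conj_rotation_mu (F : pt -> pt) : Prop :=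
  exists (H Hinv : pt -> pt) (theta : pt), diffeo_lift H Hinv /\
    area_preserving H /\
    forall x, F x = H (fst (Hinv x) + fst theta, snd (Hinv x) + snd theta).

Definition frac (t : R) : R := t - IZR (Int_part t).
Definition distZ (t : R) : R := Rmin (frac t) (1 - frac t).
Definition torus_dist (a b : pt) : R :=
  Rmax (distZ (fst a - fst b)) (distZ (snd a - snd b)).

Definition Cnear (k : nat) (eps : R) (F G : pt -> pt) : Prop :=
  (forall x, torus_dist (F x) (G x) <= eps) /\
  forall (l : list bool), (1 <= length l <= k)%nat -> forall x,
    Rabs (iter_partial l (fun q => fst (F q)) x
          - iter_partial l (fun q => fst (G q)) x) <= eps /\
    Rabs (iter_partial l (fun q => snd (F q)) x
          - iter_partial l (fun q => snd (G q)) x) <= eps.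

Definition Copen (V : (pt -> pt) -> Prop) : Prop :=
  forall F, diff0 F -> V F ->
    exists (k : nat) (eps : R), 0 < eps /\
      forall G, diff0 G -> Cnear k eps F G -> V G.

Definition Cclosure (O : (pt -> pt) -> Prop) : (pt -> pt) -> Prop :=
  fun F => diff0 F /\
    forall (k : nat) (eps : R), 0 < eps -> exists G, O G /\ Cnear k eps F G.

(** [P] is generic in the (topological subspace) [Y]: it holds on a countable
    intersection of relatively open dense subsets of [Y]. *)
Definition generic_in (Y : (pt -> pt) -> Prop) (P : (pt -> pt) -> Prop) : Prop :=
  exists V : nat -> (pt -> pt) -> Prop,
    (forall n, Copen (V n)) /\
    (forall n F, Y F -> forall (k : nat) (eps : R), 0 < eps ->
        exists G, Y G /\ V n G /\ Cnear k eps F G) /\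
    (forall F, Y F -> (forall n, V n F) -> P F).

Definition euclid (a b : pt) : R :=
  sqrt ((fst a - fst b) ^ 2 + (snd a - snd b) ^ 2).

Definition hausdorff_cvg (A : nat -> pt -> Prop) (L : pt -> Prop) : Prop :=
  forall eps, 0 < eps -> exists N, forall n, (N <= n)%nat ->
    (forall y, A n y -> exists z, L z /\ euclid y z < eps) /\
    (forall z, L z -> exists y, A n y /\ euclid y z < eps).

Definition fund_dom (x : pt) : Prop :=
  0 <= fst x < 1 /\ 0 <= snd x < 1.

Definition rot_approx (F : pt -> pt) (n : nat) : pt -> Prop :=
  fun y => exists x, fund_dom x /\
    y = (fst (Nat.iter n F x) / INR n, snd (Nat.iter n F x) / INR n).

(** the rotation set (Hausdorff limit of F^n(D)/n) is a single vector *)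
Definition pseudo_rotation (F : pt -> pt) : Prop :=
  exists v : pt, hausdorff_cvg (rot_approx F) (fun z => z = v).

(* Main.v *)
Require Import Defs.
From Stdlib Require Import Reals ZArith List.
From Coquelicot Require Import Coquelicot.
From Stdlib Require Import Lra Lia FunctionalExtensionality.
Open Scope R_scope.

Lemma frac_bounds t : 0 <= frac t < 1.
Proof. unfold frac. destruct (base_Int_part t). lra. Qed.

Lemma distZ_le (t : R) (z : Z) : distZ t <= Rabs (t - IZR z).
Proof.
  unfold distZ. pose proof (frac_bounds t) as Hf. unfold frac in *.
  set (i := Int_part t) in *.
  destruct (Z_le_gt_dec z i) as [Hz|Hz].
  - apply IZR_le in Hz. eapply Rle_trans. apply Rmin_l.
    rewrite Rabs_right; lra.
  - assert (Hz' : (i + 1 <= z)%Z) by lia. apply IZR_le in Hz'.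
    rewrite plus_IZR in Hz'. eapply Rle_trans. apply Rmin_r.
    rewrite Rabs_left; lra.
Qed.

Lemma distZ_ex (t : R) : exists z : Z, Rabs (t - IZR z) = distZ t.
Proof.
  unfold distZ. pose proof (frac_bounds t) as Hf. unfold frac in *.
  destruct (Rle_dec (t - IZR (Int_part t)) (1 - (t - IZR (Int_part t)))) as [H|H].
  - exists (Int_part t). rewrite Rmin_left by lra. rewrite Rabs_right; lra.
  - exists (Int_part t + 1)%Z. rewrite Rmin_right by lra. rewrite plus_IZR.
    rewrite Rabs_left; lra.
Qed.

Lemma distZ_nonneg t : 0 <= distZ t.
Proof. destruct (distZ_ex t) as [z Hz]. rewrite <- Hz. apply Rabs_pos. Qed.

Lemma distZ_tri s t : distZ (s + t) <= distZ s + distZ t.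
Proof.
  destruct (distZ_ex s) as [z1 H1]. destruct (distZ_ex t) as [z2 H2].
  eapply Rle_trans. apply (distZ_le _ (z1 + z2)). rewrite plus_IZR.
  rewrite <- H1, <- H2. replace (s + t - (IZR z1 + IZR z2)) with ((s - IZR z1) + (t - IZR z2)) by ring.
  apply Rabs_triang.
Qed.

Lemma distZ_0 : distZ 0 = 0.
Proof. apply Rle_antisym. eapply Rle_trans. apply (distZ_le _ 0). rewrite Rminus_0_r, Rabs_R0. lra. apply distZ_nonneg. Qed.

Lemma distZ_half (c : Z) : 1/2 <= distZ (IZR c + 1/2).
Proof.
  destruct (distZ_ex (IZR c + 1/2)) as [z Hz]. rewrite <- Hz.
  destruct (Z_le_gt_dec z c) as [H|H].
  - apply IZR_le in H. rewrite Rabs_right; lra.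
  - assert (H' : (c + 1 <= z)%Z) by lia. apply IZR_le in H'. rewrite plus_IZR in H'.
    rewrite Rabs_left; lra.
Qed.

Lemma torus_dist_tri a b c : torus_dist a c <= torus_dist a b + torus_dist b c.
Proof.
  unfold torus_dist. apply Rmax_lub.
  - replace (fst a - fst c) with ((fst a - fst b) + (fst b - fst c)) by ring.
    eapply Rle_trans. apply distZ_tri. apply Rplus_le_compat; apply Rmax_l.
  - replace (snd a - snd c) with ((snd a - snd b) + (snd b - snd c)) by ring.
    eapply Rle_trans. apply distZ_tri. apply Rplus_le_compat; apply Rmax_r.
Qed.

Lemma Cnear_tri k d1 d2 F G G' : Cnear k d1 F G -> Cnear k d2 G G' -> Cnear k (d1 + d2) F G'.
Proof.
  intros [A1 B1] [A2 B2]. split.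
  - intros x. eapply Rle_trans. apply torus_dist_tri with (b := G x).
    apply Rplus_le_compat; auto.
  - intros l Hl x. destruct (B1 l Hl x) as [C1 D1]. destruct (B2 l Hl x) as [C2 D2].
    split.
    + eapply Rle_trans. 2: apply (Rplus_le_compat _ _ _ _ C1 C2).
      eapply Rle_trans. 2: apply Rabs_triang. right. f_equal. ring.
    + eapply Rle_trans. 2: apply (Rplus_le_compat _ _ _ _ D1 D2).
      eapply Rle_trans. 2: apply Rabs_triang. right. f_equal. ring.
Qed.

Lemma Cnear_mono k d1 d2 F G : d1 <= d2 -> Cnear k d1 F G -> Cnear k d2 F G.
Proof.
  intros Hd [A B]. split.
  - intros x. eapply Rle_trans; eauto.
  - intros l Hl x. destruct (B l Hl x). split; eapply Rle_trans; eauto.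
Qed.

Lemma Cnear_refl k d F : 0 <= d -> Cnear k d F F.
Proof.
  intros Hd. split.
  - intros x. unfold torus_dist. rewrite !Rminus_diag, distZ_0. rewrite Rmax_left; lra.
  - intros l Hl x. rewrite !Rminus_diag, Rabs_R0. lra.
Qed.

Lemma partial_ext b (g h : pt -> R) : (forall p, g p = h p) -> forall p, partial b g p = partial b h p.
Proof. intros E p. unfold partial. destruct b; apply Derive_ext; intros; apply E. Qed.

Lemma partial_exists_ext b (g h : pt -> R) p : (forall p, g p = h p) -> partial_exists b g p -> partial_exists b h p.
Proof. intros E. unfold partial_exists. destruct b; apply ex_derive_ext; intros; apply E. Qed.

Lemma iter_partial_ext l (g h : pt -> R) : (forall p, g p = h p) -> forall p, iter_partial l g p = iter_partial l h p.
Proof.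
  induction l as [|b l IH]; intros E p; simpl. apply E.
  apply partial_ext. intros; apply IH; auto.
Qed.

Lemma smooth_ext (g h : pt -> R) : (forall p, g p = h p) -> smooth_fun g -> smooth_fun h.
Proof.
  intros E Hg l p. destruct (Hg l p) as [C D]. split.
  - eapply continuous_ext. 2: exact C. intros; apply iter_partial_ext; auto.
  - intros b. eapply partial_exists_ext. 2: apply D. intros; apply iter_partial_ext; auto.
Qed.

Lemma smooth_partial b g : smooth_fun g -> smooth_fun (partial b g).
Proof.
  intros Hg l p. specialize (Hg (l ++ b :: nil) p). unfold iter_partial in *.
  rewrite fold_right_app in Hg. exact Hg.
Qed.

Inductive E : (pt -> R) -> Prop :=
| E_sm f : smooth_fun f -> E f
| E_const c : E (fun _ => c)
| E_plus f g : E f -> E g -> E (fun p => f p + g p)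
| E_mult f g : E f -> E g -> E (fun p => f p * g p)
| E_comp f u v : smooth_fun f -> E u -> E v -> E (fun p => f (u p, v p)).

Lemma smooth_cont f p : smooth_fun f -> continuous f p.
Proof. intros H. exact (proj1 (H nil p)). Qed.

Lemma smooth_is_derive1 f x y : smooth_fun f -> is_derive (fun t => f (t, y)) x (partial true f (x, y)).
Proof. intros H. destruct (H nil (x, y)) as [_ D]. specialize (D true). simpl in D.
  unfold partial. simpl. apply Derive_correct. exact D. Qed.

Lemma smooth_is_derive2 f x y : smooth_fun f -> is_derive (fun t => f (x, t)) y (partial false f (x, y)).
Proof. intros H. destruct (H nil (x, y)) as [_ D]. specialize (D false). simpl in D.
  unfold partial. simpl. apply Derive_correct. exact D. Qed.

Lemma smooth_diff f x y : smooth_fun f ->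
  differentiable_pt_lim (fun a b => f (a, b)) x y (partial true f (x, y)) (partial false f (x, y)).
Proof.
  intros H. apply filterdiff_differentiable_pt_lim.
  eapply filterdiff_ext_lin.
  - apply (is_derive_filterdiff (fun a b => f (a, b)) x y (fun a b => partial true f (a, b))).
    + apply filter_forall. intros [u v]. simpl. apply smooth_is_derive1; auto.
    + apply smooth_is_derive2; auto.
    + eapply continuous_ext. 2: apply (smooth_cont _ (x, y) (smooth_partial true f H)).
      intros [u v]; reflexivity.
  - intros [u v]. simpl. reflexivity.
Qed.

Lemma comp_line f (a c : R -> R) x la lc : smooth_fun f ->
  is_derive a x la -> is_derive c x lc ->
  is_derive (fun t => f (a t, c t)) x (partial true f (a x, c x) * la + partial false f (a x, c x) * lc).
Proof.
  intros Hf Ha Hc. apply is_derive_Reals.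
  apply (derivable_pt_lim_comp_2d (fun u v => f (u, v))).
  - apply smooth_diff; auto.
  - apply is_derive_Reals; auto.
  - apply is_derive_Reals; auto.
Qed.

Definition pd (b : bool) (g : pt -> R) (p : pt) (l : R) : Prop :=
  if b then is_derive (fun t => g (t, snd p)) (fst p) l
  else is_derive (fun t => g (fst p, t)) (snd p) l.

Lemma pd_partial b g p l : pd b g p l -> partial_exists b g p /\ partial b g p = l.
Proof.
  unfold pd, partial_exists, partial. destruct b; intros H; split;
  try (eexists; exact H); apply is_derive_unique; auto.
Qed.

Lemma partial_pd b g p : partial_exists b g p -> pd b g p (partial b g p).
Proof. unfold pd, partial_exists, partial. destruct b; intros H; apply Derive_correct; auto. Qed.

Lemma E_props g : E g ->
  (forall p, continuous g p) /\
  forall b, (forall p, partial_exists b g p) /\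
    exists g', E g' /\ forall p, partial b g p = g' p.
Proof.
  induction 1 as [f Hf|c|f g Ef [Cf Df] Eg [Cg Dg]|f g Ef [Cf Df] Eg [Cg Dg]|f u v Hf Eu [Cu Du] Ev [Cv Dv]].
  - split. intros p; apply smooth_cont; auto.
    intros b. split. intros p. exact (proj2 (Hf nil p) b).
    exists (partial b f). split. apply E_sm, smooth_partial; auto. auto.
  - split. intros p; apply continuous_const.
    intros b. assert (Hp : forall p, pd b (fun _ => c) p 0).
    { intros p. destruct b; simpl; apply (is_derive_const c). }
    split. intros p. apply (pd_partial _ _ _ _ (Hp p)).
    exists (fun _ => 0). split. apply E_const. intros p. apply (pd_partial _ _ _ _ (Hp p)).
  - split. intros p. apply (continuous_plus f g); auto.
    intros b. destruct (Df b) as [Pf [f' [Ef' Hf']]]. destruct (Dg b) as [Pg [g' [Eg' Hg']]].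
    assert (Hp : forall p, pd b (fun p => f p + g p) p (partial b f p + partial b g p)).
    { intros p. pose proof (partial_pd _ _ _ (Pf p)) as A. pose proof (partial_pd _ _ _ (Pg p)) as B.
      destruct b; simpl in *; apply (is_derive_plus _ _ _ _ _ A B). }
    split. intros p. apply (pd_partial _ _ _ _ (Hp p)).
    exists (fun p => f' p + g' p). split. apply E_plus; auto.
    intros p. rewrite (proj2 (pd_partial _ _ _ _ (Hp p))). rewrite Hf', Hg'. auto.
  - split. intros p. apply (continuous_mult f g); auto.
    intros b. destruct (Df b) as [Pf [f' [Ef' Hf']]]. destruct (Dg b) as [Pg [g' [Eg' Hg']]].
    assert (Hp : forall p, pd b (fun p => f p * g p) p (partial b f p * g p + f p * partial b g p)).
    { intros p. pose proof (partial_pd _ _ _ (Pf p)) as A. pose proof (partial_pd _ _ _ (Pg p)) as B.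
      destruct p as [p1 p2].
      destruct b; simpl in *; apply (is_derive_mult _ _ _ _ _ A B); intros; apply Rmult_comm. }
    split. intros p. apply (pd_partial _ _ _ _ (Hp p)).
    exists (fun p => f' p * g p + f p * g' p). split. apply E_plus; apply E_mult; auto.
    intros p. rewrite (proj2 (pd_partial _ _ _ _ (Hp p))). rewrite Hf', Hg'. auto.
  - split.
    + intros p. apply (continuous_comp_2 u v (fun a b => f (a, b))); auto.
      eapply continuous_ext. 2: apply (smooth_cont f (u p, v p) Hf). intros [a b']; reflexivity.
    + intros b. destruct (Du b) as [Pu [u' [Eu' Hu']]]. destruct (Dv b) as [Pv [v' [Ev' Hv']]].
      assert (Hp : forall p, pd b (fun p => f (u p, v p)) p
         (partial true f (u p, v p) * partial b u p + partial false f (u p, v p) * partial b v p)).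
      { intros p. pose proof (partial_pd _ _ _ (Pu p)) as A. pose proof (partial_pd _ _ _ (Pv p)) as B.
        destruct p as [p1 p2].
        destruct b; simpl in *.
        - apply (comp_line f (fun t => u (t, p2)) (fun t => v (t, p2))); auto.
        - apply (comp_line f (fun t => u (p1, t)) (fun t => v (p1, t))); auto. }
      split. intros p. apply (pd_partial _ _ _ _ (Hp p)).
      exists (fun p => partial true f (u p, v p) * u' p + partial false f (u p, v p) * v' p).
      split. apply E_plus; apply E_mult; auto; apply E_comp; auto; apply smooth_partial; auto.
      intros p. rewrite (proj2 (pd_partial _ _ _ _ (Hp p))). rewrite Hu', Hv'. auto.
Qed.

Lemma E_smooth g : E g -> smooth_fun g.
Proof.
  intros Eg.
  assert (K : forall l, exists g', E g' /\ forall p, iter_partial l g p = g' p).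
  { induction l as [|b l [g' [Eg' Hg']]].
    - exists g. split; auto.
    - destruct (proj2 (E_props g' Eg') b) as [_ [g'' [E'' H'']]].
      exists g''. split; auto. intros p. simpl.
      rewrite (partial_ext b _ _ Hg'). auto. }
  intros l p. destruct (K l) as [g' [Eg' Hg']].
  destruct (E_props g' Eg') as [C D]. split.
  - eapply continuous_ext. 2: apply C. intros; symmetry; auto.
  - intros b. eapply partial_exists_ext with (g := g'). intros; symmetry; auto. apply D.
Qed.

Definition cmap (H Hinv : pt -> pt) (t : pt) : pt -> pt :=
  fun x => H (fst (Hinv x) + fst t, snd (Hinv x) + snd t).

Lemma cmap_smooth H Hinv t : smooth_map H -> smooth_map Hinv -> smooth_map (cmap H Hinv t).
Proof.
  intros [H1 H2] [I1 I2]. unfold cmap.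
  assert (Eu : E (fun x => fst (Hinv x) + fst t)) by (apply E_plus; [apply E_sm; auto| apply E_const]).
  assert (Ev : E (fun x => snd (Hinv x) + snd t)) by (apply E_plus; [apply E_sm; auto| apply E_const]).
  split.
  - apply (E_smooth _ (E_comp (fun q => fst (H q)) _ _ H1 Eu Ev)).
  - apply (E_smooth _ (E_comp (fun q => snd (H q)) _ _ H2 Eu Ev)).
Qed.

Lemma pair_eq (a b c d : R) : a = c -> b = d -> (a, b) = (c, d).
Proof. intros; subst; auto. Qed.

Lemma cmap_commutes H Hinv t : diffeo_lift H Hinv -> commutes_Z2 (cmap H Hinv t).
Proof.
  intros (_ & _ & HH & HH' & [a [b [c [d Ha]]]] & [a' [b' [c' [d' Hb]]]]).
  intros p m n. unfold cmap. rewrite Hb.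
  set (M := (a' * m + b' * n)%Z). set (N := (c' * m + d' * n)%Z).
  assert (Key := HH (fst p + IZR m, snd p + IZR n)).
  rewrite Hb in Key. fold M N in Key.
  rewrite (Ha (Hinv p) M N) in Key. rewrite HH in Key.
  injection Key as K1 K2.
  assert (E1 : IZR (a * M + b * N) = IZR m) by lra.
  assert (E2 : IZR (c * M + d * N) = IZR n) by lra.
  simpl. replace (fst (Hinv p) + IZR M + fst t, snd (Hinv p) + IZR N + snd t)
    with (fst (fst (Hinv p) + fst t, snd (Hinv p) + snd t) + IZR M,
          snd (fst (Hinv p) + fst t, snd (Hinv p) + snd t) + IZR N) by (simpl; apply pair_eq; ring).
  rewrite Ha. rewrite E1, E2. reflexivity.
Qed.

Lemma commutes_equiv F : commutes_Z2 F -> equivariant_Z2 F.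
Proof.
  intros HF. exists 1%Z, 0%Z, 0%Z, 1%Z. intros p m n. rewrite HF.
  f_equal; f_equal; f_equal; lia.
Qed.

Lemma cmap_inv H Hinv t x : diffeo_lift H Hinv ->
  cmap H Hinv t (cmap H Hinv (- fst t, - snd t) x) = x.
Proof.
  intros (_ & _ & HH & HH' & _). unfold cmap. rewrite HH'. simpl.
  transitivity (H (Hinv x)); [|apply HH]. f_equal. destruct (Hinv x) as [u v]. simpl. apply pair_eq; ring.
Qed.

Lemma cmap_diff0 H Hinv t : diffeo_lift H Hinv -> Defs.diff0 (cmap H Hinv t).
Proof.
  intros D. pose proof D as (S1 & S2 & _).
  split. apply cmap_commutes; auto.
  exists (cmap H Hinv (- fst t, - snd t)).
  split. apply cmap_smooth; auto.
  split. apply cmap_smooth; auto.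
  split. intros p. apply cmap_inv; auto.
  split. intros p. pose proof (cmap_inv H Hinv (- fst t, - snd t) p D) as K.
    simpl in K. rewrite !Ropp_involutive in K. destruct t; exact K.
  split; apply commutes_equiv, cmap_commutes; auto.
Qed.

Lemma conj_cmap F : Defs.conj_rotation F -> exists H Hinv t, diffeo_lift H Hinv /\ F = cmap H Hinv t.
Proof.
  intros [H [Hinv [t [D E]]]]. exists H, Hinv, t. split; auto.
  apply functional_extensionality. intros x. apply E.
Qed.

Lemma abs_le x r : Rabs x <= r -> - r <= x <= r.
Proof. unfold Rabs. destruct (Rcase_abs x); intros; lra. Qed.
Lemma abs_lt x r : Rabs x < r -> - r < x < r.
Proof. unfold Rabs. destruct (Rcase_abs x); intros; lra. Qed.
Lemma abs_le_intro x r : - r <= x <= r -> Rabs x <= r.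
Proof. unfold Rabs. destruct (Rcase_abs x); intros; lra. Qed.
Lemma abs_lt_intro x r : - r < x < r -> Rabs x < r.
Proof. unfold Rabs. destruct (Rcase_abs x); intros; lra. Qed.

Lemma abs_tri2 a b : Rabs a <= Rabs b + Rabs (a - b).
Proof. pose proof (Rabs_triang_inv a b). lra. Qed.

Definition periodic (g : pt -> R) : Prop :=
  forall p m n, g (fst p + IZR m, snd p + IZR n) = g p.

Lemma reduce01 (r : R) : exists m : Z, 0 <= r + IZR m < 1.
Proof. exists (- Int_part r)%Z. rewrite opp_IZR. destruct (base_Int_part r). lra. Qed.

Lemma cont_2d (g : pt -> R) x y : continuous g (x, y) -> continuity_2d_pt (fun u v => g (u, v)) x y.
Proof.
  intros C. apply continuity_2d_pt_filterlim.
  assert (C' : continuous (fun z : pt => g (fst z, snd z)) (x, y)).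
  { apply (continuous_ext g). intros [a b]. reflexivity. exact C. }
  exact C'.
Qed.

Lemma periodic_unif g : (forall p, continuous g p) -> periodic g ->
  forall eps, 0 < eps -> exists d, 0 < d /\ forall a b,
    Rabs (fst a - fst b) < d -> Rabs (snd a - snd b) < d -> Rabs (g a - g b) < eps.
Proof.
  intros C P eps He.
  destruct (uniform_continuity_2d (fun u v => g (u, v)) (-1) 2 (-1) 2)
    with (eps := mkposreal eps He) as [delta Hd].
  { intros x y _ _. apply cont_2d. apply C. }
  exists (Rmin delta 1). split. apply Rmin_pos. apply cond_pos. lra.
  intros a b H1 H2.
  destruct (reduce01 (fst a)) as [m Hm]. destruct (reduce01 (snd a)) as [n Hn].
  rewrite <- (P a m n), <- (P b m n).
  pose proof (Rmin_l delta 1). pose proof (Rmin_r delta 1).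
  apply abs_lt in H1. apply abs_lt in H2.
  rewrite Rabs_minus_sym.
  apply (Hd (fst a + IZR m) (snd a + IZR n) (fst b + IZR m) (snd b + IZR n)); simpl;
    try split; try lra; apply abs_lt_intro; lra.
Qed.

Lemma periodic_bounded g : (forall p, continuous g p) -> periodic g ->
  exists B, forall p, Rabs (g p) <= B.
Proof.
  intros C P. destruct (periodic_unif g C P 1 Rlt_0_1) as [d [Hd U]].
  destruct (INR_unbounded (/ d)) as [N HN].
  assert (HN0 : 0 < INR N). { pose proof (Rinv_0_lt_compat d Hd). lra. }
  assert (HN1 : / INR N < d).
  { rewrite <- (Rinv_inv d). apply Rinv_lt_contravar. apply Rmult_lt_0_compat; auto.
    apply Rinv_0_lt_compat; auto. lra. }
  exists (Rabs (g (0, 0)) + INR N). intros p.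
  destruct (reduce01 (fst p)) as [m Hm]. destruct (reduce01 (snd p)) as [n Hn].
  rewrite <- (P p m n).
  set (s1 := (fst p + IZR m) / INR N). set (s2 := (snd p + IZR n) / INR N).
  assert (Hs1 : Rabs s1 < d).
  { unfold s1. rewrite Rabs_right. unfold Rdiv. apply Rle_lt_trans with (1 * / INR N).
    apply Rmult_le_compat_r. left; apply Rinv_0_lt_compat; auto. lra. lra.
    apply Rle_ge. unfold Rdiv. apply Rmult_le_pos. lra. left; apply Rinv_0_lt_compat; auto. }
  assert (Hs2 : Rabs s2 < d).
  { unfold s2. rewrite Rabs_right. unfold Rdiv. apply Rle_lt_trans with (1 * / INR N).
    apply Rmult_le_compat_r. left; apply Rinv_0_lt_compat; auto. lra. lra.
    apply Rle_ge. unfold Rdiv. apply Rmult_le_pos. lra. left; apply Rinv_0_lt_compat; auto. }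
  assert (K : forall k, Rabs (g (INR k * s1, INR k * s2) - g (0, 0)) <= INR k).
  { induction k.
    - simpl. rewrite !Rmult_0_l, Rminus_diag, Rabs_R0. lra.
    - rewrite S_INR.
      eapply Rle_trans. 2: apply Rplus_le_compat_r; exact IHk.
      replace (g ((INR k + 1) * s1, (INR k + 1) * s2) - g (0, 0)) with
        ((g ((INR k + 1) * s1, (INR k + 1) * s2) - g (INR k * s1, INR k * s2)) +
         (g (INR k * s1, INR k * s2) - g (0, 0))) by ring.
      eapply Rle_trans. apply Rabs_triang. rewrite Rplus_comm. apply Rplus_le_compat_l.
      left. apply U; simpl.
      + replace ((INR k + 1) * s1 - INR k * s1) with s1 by ring; auto.
      + replace ((INR k + 1) * s2 - INR k * s2) with s2 by ring; auto. }
  specialize (K N).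
  replace (INR N * s1) with (fst p + IZR m) in K by (unfold s1; field; apply Rgt_not_eq; lra).
  replace (INR N * s2) with (snd p + IZR n) in K by (unfold s2; field; apply Rgt_not_eq; lra).
  eapply Rle_trans; [apply (abs_tri2 _ (g (0,0)))|]. apply Rplus_le_compat_l. exact K.
Qed.

Lemma offset (e : pt -> R) dl : (forall p, continuous e p) -> (forall p, distZ (e p) <= dl) ->
  dl < 1/2 -> exists z : Z, forall p, Rabs (e p - IZR z) <= dl.
Proof.
  intros C D Hdl. destruct (distZ_ex (e (0, 0))) as [z Hz]. exists z. intros p.
  destruct (distZ_ex (e p)) as [z' Hz'].
  destruct (Z.eq_dec z z') as [->|Hne]. rewrite Hz'. apply D.
  set (phi := fun t => e (t * fst p, t * snd p)).
  assert (Cphi : forall t : R_UniformSpace, continuous phi t).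
  { intros t. unfold phi.
    apply (continuous_comp_2 (fun t => t * fst p) (fun t => t * snd p) (fun a b => e (a, b))).
    - apply (continuous_mult (fun t : R => t) (fun _ => fst p)). apply continuous_id. apply continuous_const.
    - apply (continuous_mult (fun t : R => t) (fun _ => snd p)). apply continuous_id. apply continuous_const.
    - eapply continuous_ext. 2: apply C. intros [a b]; reflexivity. }
  assert (P0 : phi 0 = e (0, 0)) by (unfold phi; rewrite !Rmult_0_l; auto).
  assert (P1 : phi 1 = e p) by (unfold phi; rewrite !Rmult_1_l; destruct p; auto).
  pose proof (D (0,0)) as D0. pose proof (D p) as Dp.
  assert (A0 : Rabs (e (0,0) - IZR z) <= dl) by lra.
  assert (Ap : Rabs (e p - IZR z') <= dl) by lra.
  apply abs_le in A0. apply abs_le in Ap.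
  exfalso.
  destruct (Z_lt_le_dec z z') as [Hlt|Hle].
  - assert (Hz1 : (z + 1 <= z')%Z) by lia. apply IZR_le in Hz1. rewrite plus_IZR in Hz1.
    destruct (IVT_gen_consistent phi 0 1 (IZR z + 1/2) Cphi) as [t [_ Ht]].
    { split. eapply Rle_trans. apply Rmin_l. lra. eapply Rle_trans. 2: apply Rmax_r. lra. }
    pose proof (distZ_half z). pose proof (D (t * fst p, t * snd p)). unfold phi in Ht.
    rewrite Ht in H0. lra.
  - assert (Hz1 : (z' + 1 <= z)%Z) by lia. apply IZR_le in Hz1. rewrite plus_IZR in Hz1.
    destruct (IVT_gen_consistent phi 0 1 (IZR (z - 1) + 1/2) Cphi) as [t [_ Ht]].
    { rewrite minus_IZR. split. eapply Rle_trans. apply Rmin_r. lra. eapply Rle_trans. 2: apply Rmax_l. lra. }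
    pose proof (distZ_half (z - 1)). pose proof (D (t * fst p, t * snd p)). unfold phi in Ht.
    rewrite Ht in H0. lra.
Qed.

Definition cls (eta : R) (a b : pt) : Prop :=
  Rabs (fst a - fst b) < eta /\ Rabs (snd a - snd b) < eta.

Lemma iter_stab (G : pt -> pt) :
  (forall eta, 0 < eta -> exists rho, 0 < rho /\ forall a b, cls rho a b -> cls eta (G a) (G b)) ->
  forall m eta, 0 < eta -> exists dl, 0 < dl /\ forall z : nat -> pt,
    (forall j, cls dl (z (S j)) (G (z j))) -> cls eta (z m) (Nat.iter m G (z 0%nat)).
Proof.
  intros U. induction m as [|m IH]; intros eta He.
  - exists 1. split. lra. intros z _. simpl. unfold cls. rewrite !Rminus_diag, Rabs_R0. lra.
  - destruct (U (eta / 2)) as [rho [Hr Hrho]]. lra.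
    destruct (IH rho Hr) as [d [Hd Hz]].
    exists (Rmin d (eta / 2)). split. apply Rmin_pos; lra.
    intros z Hj.
    assert (Hj' : forall j, cls d (z (S j)) (G (z j))).
    { intros j. destruct (Hj j) as [A B]. split; eapply Rlt_le_trans; eauto; apply Rmin_l. }
    specialize (Hz z Hj'). specialize (Hrho _ _ Hz). simpl.
    destruct (Hj m) as [A B]. destruct Hrho as [C D].
    pose proof (Rmin_r d (eta/2)).
    split.
    + replace (fst (z (S m)) - fst (G (Nat.iter m G (z 0%nat)))) with
        ((fst (z (S m)) - fst (G (z m))) + (fst (G (z m)) - fst (G (Nat.iter m G (z 0%nat))))) by ring.
      eapply Rle_lt_trans. apply Rabs_triang. lra.
    + replace (snd (z (S m)) - snd (G (Nat.iter m G (z 0%nat)))) with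
        ((snd (z (S m)) - snd (G (z m))) + (snd (G (z m)) - snd (G (Nat.iter m G (z 0%nat))))) by ring.
      eapply Rle_lt_trans. apply Rabs_triang. lra.
Qed.

Definition coord (b : bool) (p : pt) : R := if b then fst p else snd p.

Definition Q (n : nat) (F : pt -> pt) : Prop :=
  exists (m : nat) (C : R), (1 <= m)%nat /\
    (forall b x, Rabs (coord b (F x) - coord b x) <= C) /\
    (forall b x y, Rabs ((coord b (Nat.iter m F x) - coord b x) -
                         (coord b (Nat.iter m F y) - coord b y)) <= INR m / INR (S n)).

Definition dd (F : pt -> pt) (b : bool) (N : nat) (x : pt) : R := coord b (Nat.iter N F x) - coord b x.

Lemma dd_add F b a c x : dd F b (a + c) x = dd F b a (Nat.iter c F x) + dd F b c x.
Proof. unfold dd. rewrite Nat.iter_add. ring. Qed.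

Lemma dd_bound F b C : (forall x, Rabs (coord b (F x) - coord b x) <= C) ->
  forall r x, Rabs (dd F b r x) <= INR r * C.
Proof.
  intros HC. induction r; intros x.
  - unfold dd. simpl. rewrite Rminus_diag, Rabs_R0. lra.
  - change (S r) with (1 + r)%nat. rewrite dd_add, plus_INR.
    eapply Rle_trans. apply Rabs_triang. simpl (INR 1).
    specialize (IHr x). specialize (HC (Nat.iter r F x)). unfold dd at 1. simpl. lra.
Qed.

Lemma dd_mult F b m e : (forall x y, Rabs (dd F b m x - dd F b m y) <= e) ->
  forall q x, Rabs (dd F b (q * m) x - INR q * dd F b m (0,0)) <= INR q * e.
Proof.
  intros He. induction q; intros x.
  - simpl. unfold dd. simpl. rewrite Rminus_diag. rewrite Rmult_0_l, Rminus_0_r, Rabs_R0. lra.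
  - change (S q * m)%nat with (m + q * m)%nat. rewrite dd_add, S_INR.
    replace (dd F b m (Nat.iter (q * m) F x) + dd F b (q * m) x - (INR q + 1) * dd F b m (0, 0)) with
      ((dd F b m (Nat.iter (q * m) F x) - dd F b m (0,0)) + (dd F b (q * m) x - INR q * dd F b m (0,0))) by ring.
    eapply Rle_trans. apply Rabs_triang. specialize (IHq x). specialize (He (Nat.iter (q * m) F x) (0,0)).
    lra.
Qed.

Lemma est F n : Q n F -> forall b, exists w K, 0 <= K /\ forall N x,
  Rabs (dd F b N x - INR N * w) <= K + INR N / INR (S n).
Proof.
  intros [m [C [Hm [HC HD]]]] b.
  assert (HC' : forall x, Rabs (coord b (F x) - coord b x) <= C) by auto.
  assert (C0 : 0 <= C) by (eapply Rle_trans; [apply Rabs_pos| apply (HC' (0,0))]).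
  assert (Hm0 : 0 < INR m) by (apply lt_0_INR; lia).
  set (e := INR m / INR (S n)).
  assert (He : forall x y, Rabs (dd F b m x - dd F b m y) <= e) by (intros; apply HD).
  set (w := dd F b m (0,0) / INR m).
  assert (Hw : Rabs w <= C).
  { unfold w. unfold Rdiv. rewrite Rabs_mult, Rabs_inv, (Rabs_right (INR m)) by lra.
    pose proof (dd_bound F b C HC' m (0,0)).
    apply Rmult_le_reg_r with (INR m). auto. rewrite Rmult_assoc, Rinv_l by lra. lra. }
  exists w, (2 * INR m * C). split. apply Rmult_le_pos; [lra|auto].
  intros N x.
  assert (HN : N = (N mod m + N / m * m)%nat).
  { rewrite (Nat.div_mod N m) at 1 by lia. lia. }
  set (q := (N / m)%nat) in *. set (r := (N mod m)%nat) in *.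
  assert (Hr : (r < m)%nat) by (apply Nat.mod_upper_bound; lia).
  assert (HrR : INR r <= INR m) by (apply le_INR; lia).
  assert (HNR : INR N = INR r + INR q * INR m) by (rewrite HN, plus_INR, mult_INR; auto).
  rewrite HN at 1. rewrite dd_add.
  pose proof (dd_bound F b C HC' r (Nat.iter (q * m) F x)) as B1.
  pose proof (dd_mult F b m e He q x) as B2.
  assert (E1 : INR q * dd F b m (0,0) = INR q * INR m * w) by (unfold w; field; lra).
  replace (dd F b r (Nat.iter (q * m) F x) + dd F b (q * m) x - INR N * w) with
    (dd F b r (Nat.iter (q * m) F x) + (dd F b (q * m) x - INR q * dd F b m (0,0)) - INR r * w)
    by (rewrite HNR, E1; ring).
  assert (B3 : Rabs (INR r * w) <= INR m * C).
  { rewrite Rabs_mult, Rabs_right by (apply Rle_ge, pos_INR).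
    apply Rmult_le_compat; auto using pos_INR, Rabs_pos. }
  assert (B4 : INR q * e <= INR N / INR (S n)).
  { unfold e. rewrite HNR. unfold Rdiv. rewrite <- Rmult_assoc.
    apply Rmult_le_compat_r. left; apply Rinv_0_lt_compat, lt_0_INR; lia.
    pose proof (pos_INR r). lra. }
  assert (B5 : INR r * C <= INR m * C) by (apply Rmult_le_compat_r; auto).
  eapply Rle_trans. apply Rabs_triang.
  eapply Rle_trans. apply Rplus_le_compat_l. rewrite Rabs_Ropp. exact B3.
  eapply Rle_trans. apply Rplus_le_compat_r. apply Rabs_triang.
  lra.
Qed.

Lemma est' F n : Q n F -> forall b, exists w K, 0 <= K /\ forall N x, (1 <= N)%nat ->
  Rabs (dd F b N x / INR N - w) <= K / INR N + / INR (S n).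
Proof.
  intros HQ b. destruct (est F n HQ b) as [w [K [K0 HK]]]. exists w, K. split; auto.
  intros N x HN. assert (HN0 : 0 < INR N) by (apply lt_0_INR; lia).
  replace (dd F b N x / INR N - w) with ((dd F b N x - INR N * w) / INR N) by (field; lra).
  unfold Rdiv. rewrite Rabs_mult, Rabs_inv, (Rabs_right (INR N)) by lra.
  apply Rmult_le_reg_r with (INR N). auto.
  rewrite Rmult_assoc, Rinv_l by lra. rewrite Rmult_plus_distr_r, Rmult_assoc, Rinv_l by lra.
  specialize (HK N x). unfold Rdiv in HK. lra.
Qed.

Lemma small_inv eps : 0 < eps -> exists n : nat, / INR (S n) < eps.
Proof.
  intros He. destruct (INR_unbounded (/ eps)) as [n Hn]. exists n.
  rewrite S_INR. rewrite <- (Rinv_inv eps). apply Rinv_lt_contravar.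
  apply Rmult_lt_0_compat. apply Rinv_0_lt_compat; auto. pose proof (pos_INR n); lra. lra.
Qed.

Lemma small_div K eps : 0 <= K -> 0 < eps -> exists N0 : nat, (1 <= N0)%nat /\
  forall N, (N0 <= N)%nat -> K / INR N < eps.
Proof.
  intros HK He. destruct (small_inv (eps / (K + 1))) as [n Hn].
  apply Rdiv_lt_0_compat; lra.
  exists (S n). split. lia. intros N HN.
  assert (HS : INR (S n) <= INR N) by (apply le_INR; auto).
  assert (HS0 : 0 < INR (S n)) by (apply lt_0_INR; lia).
  apply Rle_lt_trans with ((K + 1) / INR (S n)).
  - unfold Rdiv. apply Rmult_le_compat. lra. left; apply Rinv_0_lt_compat; lra. lra.
    apply Rinv_le_contravar; auto.
  - apply Rmult_lt_reg_r with (/ (K + 1)). apply Rinv_0_lt_compat; lra.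
    replace ((K + 1) / INR (S n) * / (K + 1)) with (/ INR (S n)) by (field; lra). exact Hn.
Qed.

Lemma main_est F : (forall n, Q n F) -> forall b, exists v, forall eps, 0 < eps ->
  exists N0, forall N x, (N0 <= N)%nat -> Rabs (dd F b N x / INR N - v) < eps.
Proof.
  intros HQ b.
  set (u := fun N => dd F b N (0,0) / INR N).
  assert (Key : forall eps, 0 < eps -> exists w N1, forall N x, (N1 <= N)%nat ->
            Rabs (dd F b N x / INR N - w) < eps).
  { intros eps He. destruct (small_inv (eps / 2)) as [n Hn]. lra.
    destruct (est' F n (HQ n) b) as [w [K [K0 HK]]].
    destruct (small_div K (eps / 2) K0) as [N1 [HN1 HN1']]. lra.
    exists w, N1. intros N x HN. eapply Rle_lt_trans. apply HK. lia.
    specialize (HN1' N HN). lra. }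
  assert (Cau : ex_lim_seq_cauchy u).
  { intros eps. destruct (Key (eps / 2)) as [w [N1 HN1]]. destruct eps; simpl; lra.
    exists N1. intros N M HN HM. unfold u.
    pose proof (HN1 N (0,0) HN). pose proof (HN1 M (0,0) HM).
    replace (dd F b N (0, 0) / INR N - dd F b M (0, 0) / INR M) with
      ((dd F b N (0, 0) / INR N - w) - (dd F b M (0, 0) / INR M - w)) by ring.
    eapply Rle_lt_trans. apply Rabs_triang. rewrite Rabs_Ropp. lra. }
  apply ex_lim_seq_cauchy_corr in Cau. apply Lim_seq_correct' in Cau.
  apply is_lim_seq_Reals in Cau. set (v := real (Lim_seq u)) in *.
  exists v. intros eps He.
  destruct (Key (eps / 4)) as [w [N1 HN1]]. lra.
  destruct (Cau (eps / 4)) as [N2 HN2]. lra.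
  exists N1. intros N x HN.
  specialize (HN2 (max N1 N2) ltac:(lia)). specialize (HN1 (max N1 N2) (0,0) ltac:(lia)) as A.
  pose proof (HN1 N x HN) as B. unfold Rdist, u in HN2.
  replace (dd F b N x / INR N - v) with
    ((dd F b N x / INR N - w) - (dd F b (max N1 N2) (0,0) / INR (max N1 N2) - w)
     + (dd F b (max N1 N2) (0,0) / INR (max N1 N2) - v)) by ring.
  eapply Rle_lt_trans. apply Rabs_triang.
  eapply Rle_lt_trans. apply Rplus_le_compat_r. apply Rabs_triang. rewrite Rabs_Ropp. lra.
Qed.

Lemma euclid_le a b : euclid a b <= Rabs (fst a - fst b) + Rabs (snd a - snd b).
Proof.
  unfold euclid. set (s := fst a - fst b). set (t := snd a - snd b).
  rewrite <- (sqrt_Rsqr (Rabs s + Rabs t)) by (pose proof (Rabs_pos s); pose proof (Rabs_pos t); lra).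
  apply sqrt_le_1_alt. unfold Rsqr. rewrite <- (pow2_abs s), <- (pow2_abs t).
  pose proof (Rabs_pos s); pose proof (Rabs_pos t). nra.
Qed.

Lemma Q_pseudo F : (forall n, Q n F) -> pseudo_rotation F.
Proof.
  intros HQ. destruct (main_est F HQ true) as [v1 H1]. destruct (main_est F HQ false) as [v2 H2].
  exists (v1, v2).
  assert (Main : forall eps, 0 < eps -> exists N0, forall N x, (N0 <= N)%nat -> fund_dom x ->
     euclid (fst (Nat.iter N F x) / INR N, snd (Nat.iter N F x) / INR N) (v1, v2) < eps).
  { intros eps He. destruct (H1 (eps / 4)) as [N1 HN1]. lra. destruct (H2 (eps / 4)) as [N2 HN2]. lra.
    destruct (small_div 1 (eps / 4)) as [N3 [HN3 HN3']]. lra. lra.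
    exists (max N1 (max N2 N3)). intros N x HN [[D1 D2] [D3 D4]].
    assert (HN0 : 0 < INR N) by (apply lt_0_INR; lia).
    specialize (HN1 N x ltac:(lia)). specialize (HN2 N x ltac:(lia)). specialize (HN3' N ltac:(lia)).
    unfold dd, coord in HN1, HN2.
    eapply Rle_lt_trans. apply euclid_le. simpl.
    assert (A1 : Rabs (fst x / INR N) < eps / 4).
    { unfold Rdiv. rewrite Rabs_mult, Rabs_inv, !Rabs_right by lra.
      apply Rle_lt_trans with (1 / INR N); auto. unfold Rdiv. apply Rmult_le_compat_r.
      left; apply Rinv_0_lt_compat; lra. lra. }
    assert (A2 : Rabs (snd x / INR N) < eps / 4).
    { unfold Rdiv. rewrite Rabs_mult, Rabs_inv, !Rabs_right by lra.
      apply Rle_lt_trans with (1 / INR N); auto. unfold Rdiv. apply Rmult_le_compat_r.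
      left; apply Rinv_0_lt_compat; lra. lra. }
    replace (fst (Nat.iter N F x) / INR N - v1) with
      ((fst (Nat.iter N F x) - fst x) / INR N - v1 + fst x / INR N) by (field; lra).
    replace (snd (Nat.iter N F x) / INR N - v2) with
      ((snd (Nat.iter N F x) - snd x) / INR N - v2 + snd x / INR N) by (field; lra).
    pose proof (Rabs_triang ((fst (Nat.iter N F x) - fst x) / INR N - v1) (fst x / INR N)).
    pose proof (Rabs_triang ((snd (Nat.iter N F x) - snd x) / INR N - v2) (snd x / INR N)).
    lra. }
  intros eps He. destruct (Main eps He) as [N0 HN0]. exists N0. intros N HN. split.
  - intros y [x [Dx ->]]. exists (v1, v2). split; auto.
  - intros z ->. exists (fst (Nat.iter N F (0,0)) / INR N, snd (Nat.iter N F (0,0)) / INR N).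
    split. exists (0,0). split; auto. unfold fund_dom; simpl; lra.
    apply HN0; auto. unfold fund_dom; simpl; lra.
Qed.

Lemma cont_lin (al be : R) (q : pt) : continuous (fun q : pt => al * fst q + be * snd q) q.
Proof.
  destruct q as [x y].
  apply (continuous_plus (fun q : pt => al * fst q) (fun q : pt => be * snd q)).
  - apply (continuous_mult (fun _ : pt => al) (fun q : pt => fst q)). apply continuous_const. apply continuous_fst.
  - apply (continuous_mult (fun _ : pt => be) (fun q : pt => snd q)). apply continuous_const. apply continuous_snd.
Qed.

Lemma cont_minus (f g : pt -> R) q : continuous f q -> continuous g q -> continuous (fun q => f q - g q) q.
Proof.
  intros A B. apply (continuous_plus f (fun q => - g q)). auto.
  apply (continuous_opp g). auto.
Qed.

Lemma abs4 a b c d B : Rabs a <= B -> Rabs b <= B -> Rabs c <= B -> Rabs d <= B ->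
  Rabs (a - b - c + d) <= 4 * B.
Proof.
  intros A1 A2 A3 A4. apply abs_le in A1. apply abs_le in A2. apply abs_le in A3. apply abs_le in A4.
  apply abs_le_intro. lra.
Qed.

Definition V (n : nat) (F : pt -> pt) : Prop :=
  exists (k : nat) (d : R), 0 < d /\ forall G, Defs.diff0 G -> Cnear k d F G -> Q n G.


Lemma G0_cont (H Hinv : pt -> pt) (t : pt) (D : diffeo_lift H Hinv) b x : continuous (fun x => coord b ((cmap H Hinv t) x)) x.
Proof.
  pose proof D as (S1 & S2 & _). destruct (cmap_smooth H Hinv t S1 S2) as [A B].
  destruct b; simpl; apply smooth_cont; auto.
Qed.

Lemma G0_comm (H Hinv : pt -> pt) (t : pt) (D : diffeo_lift H Hinv) : commutes_Z2 (cmap H Hinv t).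
Proof. apply cmap_commutes; auto. Qed.

Lemma K_periodic (H Hinv : pt -> pt) (t : pt) (D : diffeo_lift H Hinv) b : periodic (fun x => coord b ((cmap H Hinv t) x) - coord b x).
Proof. intros p m n. rewrite (G0_comm H Hinv t D). destruct b; simpl; ring. Qed.

Lemma K_cont (H Hinv : pt -> pt) (t : pt) (D : diffeo_lift H Hinv) b x : continuous (fun x => coord b ((cmap H Hinv t) x) - coord b x) x.
Proof.
  apply cont_minus. apply (G0_cont H Hinv t D).
  destruct b; simpl.
  - eapply continuous_ext. 2: apply (cont_lin 1 0). intros; simpl; ring.
  - eapply continuous_ext. 2: apply (cont_lin 0 1). intros; simpl; ring.
Qed.

Lemma G0_unif (H Hinv : pt -> pt) (t : pt) (D : diffeo_lift H Hinv) : forall eta, 0 < eta -> exists rho, 0 < rho /\ forall a b, cls rho a b -> cls eta ((cmap H Hinv t) a) ((cmap H Hinv t) b).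
Proof.
  intros eta He.
  destruct (periodic_unif _ (K_cont H Hinv t D true) (K_periodic H Hinv t D true) (eta / 2)) as [d1 [Hd1 U1]]. lra.
  destruct (periodic_unif _ (K_cont H Hinv t D false) (K_periodic H Hinv t D false) (eta / 2)) as [d2 [Hd2 U2]]. lra.
  exists (Rmin (Rmin d1 d2) (eta / 2)). split. repeat apply Rmin_pos; lra.
  intros a b [A B].
  pose proof (Rmin_l (Rmin d1 d2) (eta / 2)). pose proof (Rmin_r (Rmin d1 d2) (eta / 2)).
  pose proof (Rmin_l d1 d2). pose proof (Rmin_r d1 d2).
  specialize (U1 a b ltac:(lra) ltac:(lra)). specialize (U2 a b ltac:(lra) ltac:(lra)).
  simpl in U1, U2. split.
  - replace (fst ((cmap H Hinv t) a) - fst ((cmap H Hinv t) b)) with ((fst ((cmap H Hinv t) a) - fst a - (fst ((cmap H Hinv t) b) - fst b)) + (fst a - fst b)) by ring.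
    eapply Rle_lt_trans. apply Rabs_triang. lra.
  - replace (snd ((cmap H Hinv t) a) - snd ((cmap H Hinv t) b)) with ((snd ((cmap H Hinv t) a) - snd a - (snd ((cmap H Hinv t) b) - snd b)) + (snd a - snd b)) by ring.
    eapply Rle_lt_trans. apply Rabs_triang. lra.
Qed.

Lemma G0_disp (H Hinv : pt -> pt) (t : pt) (D : diffeo_lift H Hinv) : exists C0, forall b x, Rabs (coord b ((cmap H Hinv t) x) - coord b x) <= C0.
Proof.
  destruct (periodic_bounded _ (K_cont H Hinv t D true) (K_periodic H Hinv t D true)) as [B1 HB1].
  destruct (periodic_bounded _ (K_cont H Hinv t D false) (K_periodic H Hinv t D false)) as [B2 HB2].
  exists (Rmax B1 B2). intros b x. destruct b.
  - eapply Rle_trans. apply HB1. apply Rmax_l.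
  - eapply Rle_trans. apply HB2. apply Rmax_r.
Qed.

Lemma G0_iter (H Hinv : pt -> pt) (t : pt) (D : diffeo_lift H Hinv) j x : Nat.iter j (cmap H Hinv t) x = H (fst (Hinv x) + INR j * fst t, snd (Hinv x) + INR j * snd t).
Proof.
  pose proof D as (_ & _ & HH & HH' & _).
  induction j.
  - simpl. rewrite !Rmult_0_l, !Rplus_0_r. rewrite <- surjective_pairing. symmetry. apply HH.
  - simpl Nat.iter. rewrite IHj, S_INR. unfold cmap. rewrite HH'. simpl.
    f_equal. apply pair_eq; ring.
Qed.

Lemma P_bound (H Hinv : pt -> pt) (t : pt) (D : diffeo_lift H Hinv) : exists B, 0 <= B /\ forall b m x y,
  Rabs ((coord b (Nat.iter m (cmap H Hinv t) x) - coord b x) - (coord b (Nat.iter m (cmap H Hinv t) y) - coord b y)) <= 4 * B.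
Proof.
  pose proof D as (S1 & S2 & HH & HH' & [a [b [c [d Ha]]]] & _).
  set (P1 := fun q : pt => fst (H q) - (IZR a * fst q + IZR b * snd q)).
  set (P2 := fun q : pt => snd (H q) - (IZR c * fst q + IZR d * snd q)).
  assert (Per1 : periodic P1).
  { intros p m n. unfold P1. rewrite Ha. simpl. rewrite plus_IZR, !mult_IZR. ring. }
  assert (Per2 : periodic P2).
  { intros p m n. unfold P2. rewrite Ha. simpl. rewrite plus_IZR, !mult_IZR. ring. }
  assert (C1 : forall q, continuous P1 q).
  { intros q. apply cont_minus. destruct S1 as [A _]. apply smooth_cont; auto. apply cont_lin. }
  assert (C2 : forall q, continuous P2 q).
  { intros q. apply cont_minus. destruct S1 as [_ A]. apply smooth_cont; auto. apply cont_lin. }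
  destruct (periodic_bounded _ C1 Per1) as [B1 HB1].
  destruct (periodic_bounded _ C2 Per2) as [B2 HB2].
  exists (Rmax B1 B2). split.
  { eapply Rle_trans. apply (Rabs_pos (P1 (0,0))). eapply Rle_trans. apply HB1. apply Rmax_l. }
  assert (HB1' : forall q, Rabs (P1 q) <= Rmax B1 B2) by (intros; eapply Rle_trans; [apply HB1|apply Rmax_l]).
  assert (HB2' : forall q, Rabs (P2 q) <= Rmax B1 B2) by (intros; eapply Rle_trans; [apply HB2|apply Rmax_r]).
  intros bb m x y.
  assert (Ax : coord bb x = coord bb (H (Hinv x))) by (rewrite HH; auto).
  assert (Ay : coord bb y = coord bb (H (Hinv y))) by (rewrite HH; auto).
  rewrite Ax, Ay, !(G0_iter H Hinv t D).
  destruct bb; simpl.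
  - replace (fst (H (fst (Hinv x) + INR m * fst t, snd (Hinv x) + INR m * snd t)) - fst (H (Hinv x)) -
      (fst (H (fst (Hinv y) + INR m * fst t, snd (Hinv y) + INR m * snd t)) - fst (H (Hinv y))))
    with (P1 (fst (Hinv x) + INR m * fst t, snd (Hinv x) + INR m * snd t) - P1 (Hinv x)
        - P1 (fst (Hinv y) + INR m * fst t, snd (Hinv y) + INR m * snd t) + P1 (Hinv y))
    by (unfold P1; simpl; ring).
    apply abs4; auto.
  - replace (snd (H (fst (Hinv x) + INR m * fst t, snd (Hinv x) + INR m * snd t)) - snd (H (Hinv x)) -
      (snd (H (fst (Hinv y) + INR m * fst t, snd (Hinv y) + INR m * snd t)) - snd (H (Hinv y))))
    with (P2 (fst (Hinv x) + INR m * fst t, snd (Hinv x) + INR m * snd t) - P2 (Hinv x)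
        - P2 (fst (Hinv y) + INR m * fst t, snd (Hinv y) + INR m * snd t) + P2 (Hinv y))
    by (unfold P2; simpl; ring).
    apply abs4; auto.
Qed.


Lemma diff0_cont G b x : Defs.diff0 G -> continuous (fun x => coord b (G x)) x.
Proof.
  intros [_ [Finv [[S1 S2] _]]]. destruct b; simpl; apply smooth_cont; auto.
Qed.

Lemma cmap_V H Hinv t n : diffeo_lift H Hinv -> V n (cmap H Hinv t).
Proof.
  intros D. set (G0 := cmap H Hinv t).
  destruct (P_bound H Hinv t D) as [B [B0 HB]].
  destruct (G0_disp H Hinv t D) as [C0 HC0].
  fold G0 in HB, HC0.
  destruct (INR_unbounded ((4 * B + 1) * INR (S n))) as [m Hm].
  assert (HSn : 1 <= INR (S n)) by (rewrite S_INR; pose proof (pos_INR n); lra).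
  assert (Hm1 : (1 <= m)%nat).
  { assert (Hpos : 1 <= (4 * B + 1) * INR (S n)) by nra.
    destruct m. change (INR 0) with 0 in Hm. lra. lia. }
  assert (Hmn : 4 * B + 1 <= INR m / INR (S n)).
  { apply Rmult_le_reg_r with (INR (S n)). lra. unfold Rdiv. rewrite Rmult_assoc, Rinv_l by lra. lra. }
  destruct (iter_stab G0 (G0_unif H Hinv t D) m (1/2)) as [dl [Hdl Hit]]. lra.
  set (del := Rmin (1/4) (dl/2)).
  assert (Hdel1 : del <= 1/4) by apply Rmin_l.
  assert (Hdel2 : del <= dl/2) by apply Rmin_r.
  assert (Hdel0 : 0 < del) by (apply Rmin_pos; lra).
  exists 0%nat, del. split; auto.
  intros G' HG' [Hnear _].
  destruct (offset (fun x => fst (G0 x) - fst (G' x)) del) as [z1 Hz1].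
  { intros x. apply cont_minus. apply (G0_cont H Hinv t D true). apply (diff0_cont G' true x HG'). }
  { intros x. eapply Rle_trans. 2: apply (Hnear x). apply Rmax_l. }
  lra.
  destruct (offset (fun x => snd (G0 x) - snd (G' x)) del) as [z2 Hz2].
  { intros x. apply cont_minus. apply (G0_cont H Hinv t D false). apply (diff0_cont G' false x HG'). }
  { intros x. eapply Rle_trans. 2: apply (Hnear x). apply Rmax_r. }
  lra.
  exists m, (C0 + Rabs (IZR z1) + Rabs (IZR z2) + 1). split; auto. split.
  - intros b x. pose proof (Rabs_pos (IZR z1)). pose proof (Rabs_pos (IZR z2)).
    specialize (HC0 b x). specialize (Hz1 x). specialize (Hz2 x). simpl in Hz1, Hz2.
    destruct b; simpl in *.
    + replace (fst (G' x) - fst x) with ((fst (G0 x) - fst x) - (fst (G0 x) - fst (G' x) - IZR z1) - IZR z1) by ring.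
      eapply Rle_trans. apply Rabs_triang. rewrite Rabs_Ropp.
      eapply Rle_trans. apply Rplus_le_compat_r. apply Rabs_triang. rewrite Rabs_Ropp. lra.
    + replace (snd (G' x) - snd x) with ((snd (G0 x) - snd x) - (snd (G0 x) - snd (G' x) - IZR z2) - IZR z2) by ring.
      eapply Rle_trans. apply Rabs_triang. rewrite Rabs_Ropp.
      eapply Rle_trans. apply Rplus_le_compat_r. apply Rabs_triang. rewrite Rabs_Ropp. lra.
  - set (zz := fun x j => (fst (Nat.iter j G' x) + INR j * IZR z1, snd (Nat.iter j G' x) + INR j * IZR z2)).
    assert (Step : forall x j, cls dl (zz x (S j)) (G0 (zz x j))).
    { intros x j. set (w := Nat.iter j G' x).
      assert (Eq : G0 (zz x j) = (fst (G0 w) + INR j * IZR z1, snd (G0 w) + INR j * IZR z2)).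
      { unfold zz. fold w. rewrite !INR_IZR_INZ, <- !mult_IZR. apply (G0_comm H Hinv t D). }
      rewrite Eq. unfold zz. simpl Nat.iter. fold w. rewrite S_INR. simpl.
      specialize (Hz1 w). specialize (Hz2 w). simpl in Hz1, Hz2. unfold cls; simpl. split.
      + replace (fst (G' w) + (INR j + 1) * IZR z1 - (fst (G0 w) + INR j * IZR z1))
          with (- (fst (G0 w) - fst (G' w) - IZR z1)) by ring. rewrite Rabs_Ropp. lra.
      + replace (snd (G' w) + (INR j + 1) * IZR z2 - (snd (G0 w) + INR j * IZR z2))
          with (- (snd (G0 w) - snd (G' w) - IZR z2)) by ring. rewrite Rabs_Ropp. lra. }
    assert (Z0 : forall x, zz x 0%nat = x).
    { intros x. unfold zz. simpl. rewrite !Rmult_0_l, !Rplus_0_r. destruct x; auto. }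
    intros b x y.
    pose proof (Hit (zz x) (Step x)) as [Ax1 Ax2]. pose proof (Hit (zz y) (Step y)) as [Ay1 Ay2].
    rewrite Z0 in Ax1, Ax2, Ay1, Ay2.
    specialize (HB b m x y).
    unfold zz in Ax1, Ax2, Ay1, Ay2. simpl in Ax1, Ax2, Ay1, Ay2.
    destruct b; simpl in *.
    + replace (fst (Nat.iter m G' x) - fst x - (fst (Nat.iter m G' y) - fst y)) with
        ((fst (Nat.iter m G' x) + INR m * IZR z1 - fst (Nat.iter m G0 x))
         - (fst (Nat.iter m G' y) + INR m * IZR z1 - fst (Nat.iter m G0 y))
         + (fst (Nat.iter m G0 x) - fst x - (fst (Nat.iter m G0 y) - fst y))) by ring.
      eapply Rle_trans. apply Rabs_triang. eapply Rle_trans. apply Rplus_le_compat_r. apply Rabs_triang.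
      rewrite Rabs_Ropp. lra.
    + replace (snd (Nat.iter m G' x) - snd x - (snd (Nat.iter m G' y) - snd y)) with
        ((snd (Nat.iter m G' x) + INR m * IZR z2 - snd (Nat.iter m G0 x))
         - (snd (Nat.iter m G' y) + INR m * IZR z2 - snd (Nat.iter m G0 y))
         + (snd (Nat.iter m G0 x) - snd x - (snd (Nat.iter m G0 y) - snd y))) by ring.
      eapply Rle_trans. apply Rabs_triang. eapply Rle_trans. apply Rplus_le_compat_r. apply Rabs_triang.
      rewrite Rabs_Ropp. lra.
Qed.

Lemma V_open n : Copen (V n).
Proof.
  intros F HF [k [d [Hd HV]]]. exists k, (d / 2). split. lra.
  intros G HG HFG. exists k, (d / 2). split. lra.
  intros G' HG' HGG'. apply HV; auto.
  replace d with (d / 2 + d / 2) by field. eapply Cnear_tri; eauto.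
Qed.

Lemma gen (O : (pt -> pt) -> Prop) : (forall G, O G -> Defs.conj_rotation G) ->
  generic_in (Cclosure O) pseudo_rotation.
Proof.
  intros HO. exists V. split; [apply V_open|split].
  - intros n F [HF Happ] k eps He. destruct (Happ k eps He) as [G0 [OG HG]].
    destruct (conj_cmap G0 (HO G0 OG)) as [H [Hinv [t [D ->]]]].
    exists (cmap H Hinv t). split. split. apply cmap_diff0; auto.
    intros k' e' He'. exists (cmap H Hinv t). split; auto. apply Cnear_refl; lra.
    split. apply cmap_V; auto. auto.
  - intros F [HF _] HV. apply Q_pseudo. intros n. destruct (HV n) as [k [d [Hd HQ]]].
    apply HQ; auto. apply Cnear_refl; lra.
Qed.

Theorem mainTheorem3 :
  generic_in (Cclosure conj_rotation) pseudo_rotation /\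
  generic_in (Cclosure conj_rotation_mu) pseudo_rotation.
Proof.
  split; apply gen; auto.
  intros G [H [Hinv [t [D [_ E]]]]]. exists H, Hinv, t; auto.
Qed.
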